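(* Let $G=(V,E,w)$ be an $n$-vertex directed graph with real edge weights, let $h>0$ be an integer and $\tau\ge 2n^2$ an integer, and run the procedure $\textsc{DetPreprocessing}(G,\tau,h)$ described below. At termination: (1) $\textsc{Congestion}(v)\le\tau$ for every $v\in V$; (2) $\sum_{v\in V}\textsc{Congestion}(v)=O(n^3\log h)$; (3) $|C|=O(n^3\log h/\tau)$; (4) each computed path $\pi^i_{s,t}$ is an $h_i$-hop-improving shortest path in $G$ with regard to $G\setminus C$, where $C$ is the final set.
   Context: Let $i_h=\lceil \log_{3/2} h\rceil$ and $h_i=(3/2)^i$ for $i=0,\dots,i_h$. A path is $h'$-hop-restricted if it has at most $h'$ edges; $\mathbf{dist}^{h'}_H(s,t)$ denotes the minimum weight of an $h'$-hop-restricted $s$-to-$t$ path in $H$. For $C\subseteq V$, $G\setminus C$ denotes the induced subgraph $G[V\setminus C]$. A path $\pi_{s,t}$ from $s$ to $t$ is an $h'$-hop-improving shortest path in $G$ with regard to $H\subseteq G$ if it is a path in $G$ whose weight is at most $\mathbf{dist}^{h'}_H(s,t)$. The procedure $\textsc{DetPreprocessing}(G,\tau,h)$: initialize $C\gets\emptyset$, $\textsc{Congestion}(v)\gets 0$ for all $v\in V$, and $\pi^i_{s,t}\gets\bot$ (the empty path of weight $\infty$) for all $s,t,i$. Then process every vertex $s\in V$ exactly once as a root, in an arbitrary order; for each root $s$ and each $i\in[0,i_h]$ in turn: (1) compute, by Bellman-Ford from $s$ in $G[V\setminus C]$, paths $\pi^i_{s,t}$ for all $t\in V$ that are shortest among $h_i$-hop-restricted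 $s$-to-$t$ paths in $G[V\setminus C]$; (2) for every $t\in V$ and every vertex $u$ on $\pi^i_{s,t}$, increase $\textsc{Congestion}(u)$ by $\lceil n/h_i\rceil$; (3) set $C\gets\{v\in V:\textsc{Congestion}(v)>\tau/2\}$. *)

(* Defs.v *)
From mathcomp Require Import all_boot all_order all_algebra.
Set Implicit Arguments. Unset Strict Implicit. Unset Printing Implicit Defensive.
Import Order.TTheory GRing.Theory Num.Theory.
Local Open Scope ring_scope.

(* A directed graph G = (V,E,w) is an
   edge relation E : rel 'I_n together with real weights w (only used on
   edges).  R is any real domain (the reals being one instance). *)

Section Walks.
Variables (n : nat) (R : realDomainType).
Variables (E : rel 'I_n) (w : 'I_n -> 'I_n -> R).

Fixpoint pweight (x : 'I_n) (p : seq 'I_n) : R :=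
  if p is y :: p' then w x y + pweight y p' else 0.

Definition is_path_in (C : {set 'I_n}) (s t : 'I_n) (p : seq 'I_n) : bool :=
  [&& path E s p, last s p == t & all (fun v => v \notin C) (s :: p)].

(* h'-hop-restricted s-to-t path of G[V \ C] (size p = number of edges) *)
Definition hop_path (C : {set 'I_n}) (h' : nat) (s t : 'I_n) (p : seq 'I_n)
  : bool := is_path_in C s t p && (size p <= h')%N.

(* A computed path is an option: None = the empty path bot of weight +oo,
   Some p = the path s :: p. *)

(* pi is an h'-hop-improving shortest s-to-t path in G w.r.t. G \ C:
   pi is a path of G from s to t whose weight is at most
   dist^{h'}_{G\C}(s,t) (minimum over h'-hop paths, +oo if there is none). *)
Definition hop_improving (C : {set 'I_n}) (h' : nat) (s t : 'I_n)
    (pi : option (seq 'I_n)) : Prop :=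
  match pi with
  | Some p => is_path_in set0 s t p /\
              (forall q, hop_path C h' s t q -> pweight s p <= pweight s q)
  | None => forall q, ~~ hop_path C h' s t q
  end.

(* pi is a shortest path among the h'-hop-restricted s-to-t paths of
   G[V \ C] (None when no such path exists): the specification of the
   output of hop-restricted Bellman-Ford. *)
Definition hop_shortest (C : {set 'I_n}) (h' : nat) (s t : 'I_n)
    (pi : option (seq 'I_n)) : Prop :=
  match pi with
  | Some p => hop_path C h' s t p /\
              (forall q, hop_path C h' s t q -> pweight s p <= pweight s q)
  | None => forall q, ~~ hop_path C h' s t q
  end.

End Walks.

(* i_h = ceil(log_{3/2} h) = least i with (3/2)^i >= h, i.e. h 2^i <= 3^i *)
Lemma ih_exists (h : nat) : exists i, (h * 2 ^ i <= 3 ^ i)%N.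
Proof.
exists (2 * h)%N.
have H1 : (h <= 2 ^ h)%N by apply: ltnW; apply: ltn_expl.
apply: (leq_trans (leq_mul H1 (leqnn _))).
rewrite -expnD (mulnC 2 h) !expnM.
have -> : (h + h * 2 = h * 3)%N by rewrite -mulnS.
rewrite !(mulnC h) !expnM.
rewrite -(expnM 3 h 2) (mulnC h 2) (expnM 3 2 h).
by case: h H1 => [|h] _ //; rewrite leq_exp2r.
Qed.

Definition i_h (h : nat) : nat := ex_minn (ih_exists h).

(* hop bound h_i = (3/2)^i : a path is h_i-hop restricted iff it has at most
   floor((3/2)^i) = 3^i %/ 2^i edges *)
Definition hop_bound (i : nat) : nat := (3 ^ i %/ 2 ^ i)%N.

(* ceil(n / h_i) = ceil(n 2^i / 3^i) *)
Definition cong_incr (n i : nat) : nat := ((n * 2 ^ i + 3 ^ i).-1 %/ 3 ^ i)%N.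

Definition verts (n : nat) (s : 'I_n) (pi : option (seq 'I_n)) : seq 'I_n :=
  if pi is Some p then s :: p else [::].

Record dp_state (n : nat) := DPState {
  congestion : 'I_n -> nat;
  cset : {set 'I_n};
  paths : 'I_n -> nat -> 'I_n -> option (seq 'I_n) (* pi^i_{s,t} = paths s i t *)
}.

(* A Bellman-Ford oracle: given root s, index i and current set C, returns
   for every t the computed path pi^i_{s,t} in G[V \ C]. *)
Definition bf_oracle (n : nat) :=
  'I_n -> nat -> {set 'I_n} -> 'I_n -> option (seq 'I_n).

Definition valid_oracle (n : nat) (R : realDomainType) (E : rel 'I_n)
    (w : 'I_n -> 'I_n -> R) (bf : bf_oracle n) : Prop :=
  forall s i C t, hop_shortest E w C (hop_bound i) s t (bf s i C t).

(* One step (root s, index i): (1) compute the paths, (2) update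
   congestion, (3) recompute C = {v | Congestion(v) > tau/2}. *)
Definition dp_step (n : nat) (bf : bf_oracle n) (tau : nat)
    (st : dp_state n) (si : 'I_n * nat) : dp_state n :=
  let: (s, i) := si in
  let P := bf s i (cset st) in
  let cong' := fun v => (congestion st v +
                  \sum_(t : 'I_n | v \in verts s (P t)) cong_incr n i)%N in
  DPState cong' [set v | (tau < 2 * cong' v)%N]
    (fun s' i' t => if (s' == s) && (i' == i) then P t else paths st s' i' t).

Definition dp_init (n : nat) : dp_state n :=
  DPState (fun _ => 0%N) set0 (fun _ _ _ => None).

Definition det_preprocessing (n : nat) (bf : bf_oracle n) (tau h : nat)
    (order : seq 'I_n) : dp_state n :=
  foldl (dp_step bf tau) (dp_init n)
    [seq (s, i) | s <- order, i <- iota 0 (i_h h).+1].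

(* Main.v *)
Require Import Defs.
From mathcomp Require Import all_boot all_order all_algebra.
From mathcomp Require Import zify.
Import Order.TTheory GRing.Theory Num.Theory.

Lemma exp23 i : (2 ^ i <= 3 ^ i)%N.
Proof. elim: i => // i IH; rewrite !expnS; exact: leq_mul. Qed.

Lemma incr_le n i : (cong_incr n i <= n)%N.
Proof.
rewrite /cong_incr -ltnS ltn_divLR ?expn_gt0 //.
have := exp23 i; have : (0 < 3 ^ i)%N by rewrite expn_gt0.
move: (2 ^ i) (3 ^ i) => b a ha hb.
have : (n * b <= n * a)%N by rewrite leq_mul2l hb orbT.
nia.
Qed.

Lemma key n i k : (k <= n)%N -> (k <= (hop_bound i).+1)%N ->
  (k * cong_incr n i <= 3 * n)%N.
Proof.
move=> hkn hkb.
have hq2 := incr_le n i.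
have ha : (0 < 3 ^ i)%N by rewrite expn_gt0.
have hb : (0 < 2 ^ i)%N by rewrite expn_gt0.
have hq : (cong_incr n i * 3 ^ i <= (n * 2 ^ i + 3 ^ i).-1)%N by apply: leq_divM.
have hh : (hop_bound i * 2 ^ i <= 3 ^ i)%N by apply: leq_divM.
move: hq hh hkb hq2; rewrite /hop_bound.
move: (cong_incr n i) (3 ^ i %/ 2 ^ i)%N ha hb => q hb' ha' hb2 hq hh hkb hq2.
move: ha' hb2 hq hh; move: (2 ^ i) (3 ^ i) => b a hb2 ha' hq hh.
case: (leqP (n * b) a) => hnb.
  have : (q < 2)%N.
    have : (q * a < 2 * a)%N by lia.
    by rewrite ltn_pmul2r.
  nia.
have hbn : (hb' < n)%N.
  have : (hb' * b < n * b)%N by lia.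
  by rewrite ltn_pmul2r.
have : (hb' * q <= n + hb')%N.
  have : (hb' * q * a <= (n + hb') * a)%N.
    have : (hb' * (q * a) <= hb' * (n * b + a))%N by apply: leq_mul => //; lia.
    have : (hb' * (n * b) <= n * a)%N by rewrite mulnCA leq_mul2l hh orbT.
    nia.
  by rewrite leq_pmul2r.
nia.
Qed.

Lemma ih_le h : (i_h h <= 2 * (trunc_log 2 h).+1)%N.
Proof.
rewrite /i_h; case: ex_minnP => m _ /(_ (2 * (trunc_log 2 h).+1)%N); apply.
set L := (trunc_log 2 h).+1.
have hl : (h < 2 ^ L)%N by apply: trunc_log_ltn.
rewrite !expnM.
have -> : (2 ^ 2 = 4)%N by []. have -> : (3 ^ 2 = 9)%N by [].
apply: (@leq_trans (2 ^ L * 4 ^ L)); first by rewrite leq_mul2r ltnW ?orbT.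
rewrite -expnMn; by rewrite leq_exp2r //; case: L.
Qed.

Definition inv n tau (st : dp_state n) :=
  cset st = [set v | (tau < 2 * congestion st v)%N] /\
  forall v, (congestion st v <= tau)%N.

Lemma inc_C n (R : realDomainType) (E : rel 'I_n) (w : 'I_n -> 'I_n -> R)
  (bf : bf_oracle n) s i (C : {set 'I_n}) v : valid_oracle E w bf -> v \in C ->
  (\sum_(t : 'I_n | v \in verts s (bf s i C t)) cong_incr n i = 0)%N.
Proof.
move=> Hbf hv; rewrite big_pred0 // => t.
have := Hbf s i C t; case: (bf s i C t) => [p|] //= [] /andP [/and3P [_ _ Hall] _] _.
apply/negP => Hv; move/allP: Hall => /(_ v Hv) /=; by rewrite hv.
Qed.

Lemma inc_le n (P : pred 'I_n) i :
  (\sum_(t : 'I_n | P t) cong_incr n i <= n * n)%N.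
Proof.
apply: (@leq_trans (\sum_(t : 'I_n) cong_incr n i)).
  rewrite [X in (_ <= X)%N](bigID P) /=; exact: leq_addr.
rewrite sum_nat_const card_ord leq_mul2l incr_le orbT //.
Qed.

Lemma inc_sum n (R : realDomainType) (E : rel 'I_n) (w : 'I_n -> 'I_n -> R)
  (bf : bf_oracle n) s i (C : {set 'I_n}) : valid_oracle E w bf ->
  (\sum_(v : 'I_n) \sum_(t : 'I_n | v \in verts s (bf s i C t)) cong_incr n i
     <= 3 * n ^ 2)%N.
Proof.
move=> Hbf.
rewrite (eq_bigr (fun v => \sum_(t : 'I_n) if v \in verts s (bf s i C t) then cong_incr n i else 0)%N); last by move=> v _; rewrite big_mkcond.
rewrite exchange_big /=.
apply: (@leq_trans (\sum_(t : 'I_n) 3 * n)%N); last by rewrite sum_nat_const card_ord; nia.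
apply: leq_sum => t _.
rewrite -big_mkcond sum_nat_const.
apply: key; first by rewrite -[X in (_ <= X)%N]card_ord max_card.
apply: (leq_trans (card_size _)).
have := Hbf s i C t; case: (bf s i C t) => [p|] //= [] /andP [_ Hs] _.
by rewrite ltnS.
Qed.

Lemma step_inv n (R : realDomainType) (E : rel 'I_n) (w : 'I_n -> 'I_n -> R)
  (bf : bf_oracle n) tau (st : dp_state n) s i : valid_oracle E w bf -> (2 * n ^ 2 <= tau)%N ->
  @inv n tau st ->
  let st' := dp_step bf tau st (s, i) in
  [/\ @inv n tau st', cset st \subset cset st' &
     (\sum_v congestion st' v <= \sum_v congestion st v + 3 * n ^ 2)%N].
Proof.
move=> Hbf Htau [HC Hle] /=.
split.
- split=> // v.
  case: (boolP (v \in cset st)) => hv.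
    rewrite /= big_pred0 ?addn0 // => t.
    have := Hbf s i (cset st) t; case: (bf s i (cset st) t) => [p|] //= [] /andP [/and3P [_ _ Hall] _] _.
    apply/negP => Hv; move/allP: Hall => /(_ v Hv) /=; by rewrite hv.
  have {}hv : (2 * congestion st v <= tau)%N by move: hv; rewrite HC inE -leqNgt.
  have := @inc_le n (fun t => v \in verts s (bf s i (cset st) t)) i.
  rewrite /=; nia.
- apply/subsetP => v hv; rewrite inE.
  move: (hv); rewrite {1}HC inE => hv'; apply: (leq_trans hv'); lia.
- rewrite big_split /= leq_add2l; exact: inc_sum.
Qed.

Set Implicit Arguments. Unset Strict Implicit.
Definition good n (R : realDomainType) (E : rel 'I_n) (w : 'I_n -> 'I_n -> R)
  (st : dp_state n) (S : seq ('I_n * nat)) :=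
  forall s i t, (s, i) \in S -> exists C : {set 'I_n},
    C \subset cset st /\ hop_shortest E w C (hop_bound i) s t (paths st s i t).

Lemma fold_all n (R : realDomainType) (E : rel 'I_n) (w : 'I_n -> 'I_n -> R)
  (bf : bf_oracle n) tau : valid_oracle E w bf -> (2 * n ^ 2 <= tau)%N ->
  forall l (st : dp_state n) S, @inv n tau st -> good E w st S ->
  let st' := foldl (dp_step bf tau) st l in
  [/\ @inv n tau st',
      (\sum_v congestion st' v <= \sum_v congestion st v + 3 * n ^ 2 * size l)%N
    & good E w st' (S ++ l)].
Proof.
move=> Hbf Htau; elim=> [|[s i] l IH] st S Hinv Hg /=.
  by rewrite muln0 addn0 cats0.
have [Hinv1 Hsub Hsum] := @step_inv n R E w bf tau st s i Hbf Htau Hinv.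
have Hg1 : good E w (dp_step bf tau st (s, i)) (rcons S (s, i)).
  move=> s' i' t; rewrite mem_rcons inE /=.
  case: (boolP ((s' == s) && (i' == i))) => [/andP [/eqP -> /eqP ->] _|hne].
    by exists (cset st); split.
  rewrite xpair_eqE (negbTE hne) /= => /(Hg s' i' t) [C [HC Hs]].
  by exists C; split => //; apply: subset_trans Hsub.
have [Hi2 Hs2 Hg2] := IH _ _ Hinv1 Hg1.
split => //.
  apply: (leq_trans Hs2); rewrite mulnS addnA leq_add2r; exact: Hsum.
by rewrite -cat_rcons.
Qed.

Lemma improving n (R : realDomainType) (E : rel 'I_n) (w : 'I_n -> 'I_n -> R)
  (C C' : {set 'I_n}) h' s t pi : C \subset C' ->
  hop_shortest E w C h' s t pi -> hop_improving E w C' h' s t pi.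
Proof.
move=> Hsub.
have Hq : forall q, hop_path E C' h' s t q -> hop_path E C h' s t q.
  move=> q /andP [/and3P [H1 H2 H3] H4]; apply/andP; split => //; apply/and3P; split => //.
  apply/allP => v /(allP H3); apply: contra; exact: (subsetP Hsub).
case: pi => [p|] /=.
  move=> [/andP [/and3P [H1 H2 H3] _] Hmin]; split.
    apply/and3P; split => //; apply/allP => v _; by rewrite inE.
  by move=> q /Hq; apply: Hmin.
by move=> H q; apply/negP => /Hq; apply/negP.
Qed.

Theorem lemma3p4 :
  exists c : nat,
  forall (R : realDomainType) (n : nat) (E : rel 'I_n) (w : 'I_n -> 'I_n -> R)
         (h tau : nat) (order : seq 'I_n) (bf : bf_oracle n),
    (0 < h)%N -> (2 * n ^ 2 <= tau)%N ->
    perm_eq order (enum 'I_n) ->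
    valid_oracle E w bf ->
    let st := det_preprocessing bf tau h order in
    [/\ (forall v, congestion st v <= tau)%N,
        (\sum_(v : 'I_n) congestion st v <= c * n ^ 3 * (trunc_log 2 h).+1)%N,
        (#|cset st| * tau <= c * n ^ 3 * (trunc_log 2 h).+1)%N
      & forall (s t : 'I_n) (i : nat), (i <= i_h h)%N ->
          hop_improving E w (cset st) (hop_bound i) s t (paths st s i t)].
Proof.
exists 18%N => R n E w h tau order bf Hh Htau Hperm Hbf /=.
have Hinv0 : @inv n tau (dp_init n).
  split => //=; apply/setP => v; by rewrite !inE muln0 ltn0.
have Hg0 : good E w (dp_init n) [::] by [].
rewrite /det_preprocessing.
set l := [seq (s, i) | s <- order, i <- iota 0 (i_h h).+1].
have [[HC Hle] Hsum Hg] := @fold_all n R E w bf tau Hbf Htau l _ _ Hinv0 Hg0.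
set st := foldl _ _ _ in HC Hle Hsum Hg *.
have Hsz : size l = (n * (i_h h).+1)%N.
  by rewrite size_allpairs size_iota (perm_size Hperm) size_enum_ord.
have Hih := ih_le h.
have Hsum' : (\sum_v congestion st v <= 9 * n ^ 3 * (trunc_log 2 h).+1)%N.
  apply: (leq_trans Hsum); rewrite big1 //= add0n Hsz.
  move: Hih; set L := (trunc_log 2 h).+1; nia.
split => //.
- apply: (leq_trans Hsum'); rewrite leq_mul2r leq_mul2r; lia.
- apply: (@leq_trans (2 * \sum_v congestion st v)%N); last first.
    move: Hsum'; set X := (\sum_v _)%N; set L := (trunc_log 2 h).+1; nia.
  rewrite -sum_nat_const.
  apply: (@leq_trans (\sum_(v in cset st) 2 * congestion st v)%N).
    apply: leq_sum => v; rewrite HC inE => /ltnW //.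
  rewrite big_distrr /= [X in (_ <= X)%N](bigID (fun v => v \in cset st)) /=.
  exact: leq_addr.
- move=> s t i Hi.
  have Hin : (s, i) \in [::] ++ l.
    apply: allpairs_f; first by rewrite (perm_mem Hperm) mem_enum.
    by rewrite mem_iota add0n ltnS.
  have [C [Hsub Hs]] := Hg s i t Hin.
  exact: improving Hsub Hs.
Qed.
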